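(* For every integer $n>2$ there exist two pedigrees $\mathcal{T}(X_0)$ and $\mathcal{U}(X_0)$ on the same extant set $X_0$ with $|X_0|=n$ such that (i) for every $Y\subset X_0$ with $|Y|=n-1$ there is an isomorphism from the sub-pedigree $\mathcal{T}(Y)$ to the sub-pedigree $\mathcal{U}(Y)$ fixing every vertex of $Y$; but (ii) there is no isomorphism from $\mathcal{T}(X_0)$ to $\mathcal{U}(X_0)$ fixing every vertex of $X_0$. In particular, for every $n>3$ there are pedigrees of order $n$ that are not $(n-1)$-reconstructible.
   Context: A (general) pedigree $\mathcal{T}(X_0)$ on a set $X_0$ is a finite directed graph on a vertex set $V$ such that: every vertex has out-degree $0$ or $2$; $X_0\subseteq V$ and every vertex of $X_0$ has in-degree $0$; there are no isolated vertices. Vertices of $X_0$ are called extant; $|X_0|$ is the order of the pedigree. If $uv$ is an arc, $v$ is a parent of $u$. A vertex $v$ is an ancestor of $u$ (and $u$ a descendant of $v$) if there is a directed path from $u$ to $v$ (every vertex is its own ancestor and descendant). For $Y\subseteq X_0$, the sub-pedigree $\mathcal{T}(Y)$ is obtained from $\mathcal{T}(X_0)$ by deleting every vertex that has no descendant in $Y$; its extant set is $Y$. An isomorphism of pedigrees is a bijection of vertex sets preserving arcs in both directions. For $n>r>2$, two pedigrees of order $n$ on the same extant set $X_0$ are $r$-hypomorphic if for every $Y\subset X_0$ with $|Y|=r$ there is an isomorphism $\mathcal{T}(Y)\to\mathcal{U}(Y)$ fixing each vertex of $Y$; $\mathcal{T}(X_0)$ is $r$-reconstructible if every pedigree $\mathcal{U}(X_0)$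 that is $r$-hypomorphic to it is isomorphic to it via an isomorphism fixing each vertex of $X_0$. *)

(* Defs.v *)
From mathcomp Require Import all_boot.
Set Implicit Arguments. Unset Strict Implicit. Unset Printing Implicit Defensive.

(* A (general) pedigree on the extant label set X0: a finite simple digraph
   (no loops, no multiple arcs) on the vertex type [pV], arcs [parc u v]
   meaning "v is a parent of u", together with an injective embedding of
   the extant set X0 into the vertices. *)
Record pedigree (X0 : finType) := Pedigree {
  pV : finType;
  parc : rel pV;
  pext : X0 -> pV;
  pext_inj : injective pext;
  parc_irr : irreflexive parc;
  pout_deg : forall u : pV, #|[set v | parc u v]| \in [:: 0; 2];
  pext_in0 : forall (x : X0) (u : pV), ~~ parc u (pext x);
  pno_isol : forall v : pV, exists u : pV, parc v u || parc u v
}.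

Definition descendant (X0 : finType) (P : pedigree X0) (u v : pV P) : bool :=
  connect (@parc X0 P) u v.

Definition subped_vertices (X0 : finType) (P : pedigree X0) (Y : {set X0})
  : {set pV P} :=
  [set v | [exists y in Y, descendant (pext P y) v]].

Definition sub_iso (X0 : finType) (T U : pedigree X0) (Y : {set X0}) : Prop :=
  exists f : pV T -> pV U,
    [/\ {in subped_vertices T Y &, injective f},
        f @: subped_vertices T Y = subped_vertices U Y,
        {in subped_vertices T Y &, forall u v, parc u v = parc (f u) (f v)}
      & {in Y, forall y, f (pext T y) = pext U y}].

Definition r_hypomorphic (X0 : finType) (r : nat) (T U : pedigree X0) : Prop :=
  forall Y : {set X0}, #|Y| = r -> sub_iso T U Y.

Definition r_reconstructible (X0 : finType) (r : nat) (T : pedigree X0) : Prop :=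
  forall U : pedigree X0, r_hypomorphic r T U -> sub_iso T U setT.

(* Main.v *)
Require Import Defs.
From mathcomp Require Import all_boot.
From mathcomp Require Import zify.
Set Implicit Arguments. Unset Strict Implicit. Unset Printing Implicit Defensive.

Lemma inlE (A B : eqType) (a b : A) : (@inl A B a == inl b) = (a == b).
Proof. by apply/eqP/eqP => [[]|->]. Qed.
Lemma inrE (A B : eqType) (a b : B) : (@inr A B a == inr b) = (a == b).
Proof. by apply/eqP/eqP => [[]|->]. Qed.
Lemma inlrE (A B : eqType) (a : A) (b : B) : (inl a == inr b) = false.
Proof. by []. Qed.
Lemma inrlE (A B : eqType) (a : A) (b : B) : (inr b == inl a) = false.
Proof. by []. Qed.
Definition sumE := (inlE, inrE, inlrE, inrlE, xpair_eqE).

Section Cons.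
Variable m : nat.
Local Notation N := m.+3.
Definition V := (('I_N + ('I_N * bool)) + ('I_N * bool))%type.
Definition ext (i : 'I_N) : V := inl (inl i).
Definition vint (i : 'I_N) (s : bool) : V := inl (inr (i, s)).
Definition fnd (i : 'I_N) (s : bool) : V := inr (i, s).

Lemma ordS_val (i : 'I_N) : val (ordS i) = if i == ord_max then 0 else i.+1.
Proof.
rewrite /=; case: eqP => [->|ne]; first by rewrite /= modnn.
rewrite modn_small //; have := ltn_ord i; have : val i != m.+2.
  by apply/negP => /eqP h; apply: ne; apply: val_inj.
move=> h1 h2. by rewrite ltnS ltn_neqAle h1 -ltnS h2.
Qed.

Lemma ordS_neq (i : 'I_N) : ordS i != i.
Proof.
apply/negP => /eqP/(congr1 val); rewrite ordS_val; case: eqP => [->|_] /=; lia.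
Qed.

Lemma ordSS_neq (i : 'I_N) : ordS (ordS i) != i.
Proof.
apply/negP => /eqP/(congr1 val); rewrite !ordS_val.
have := ltn_ord i.
case: (i =P ord_max) => [-> |ne] /=.
  by case: eqP.
have hi : (i == ord_max) = false by apply/eqP.
case: eqP => [e|_] /=.
  move/(congr1 val): e; rewrite ordS_val hi /= => e; lia.
move=> _; lia.
Qed.

Variable t : 'I_N -> bool.

Definition par : rel V := fun u v =>
  match u, v with
  | inl (inl i), inl (inr (i', _)) => i' == i
  | inl (inr (i, s)), inr (k, s') =>
      ((k == i) && (s' == s)) || ((k == ordS i) && (s' == s (+) t i))
  | _, _ => false
  end.

Lemma par_irr : irreflexive par.
Proof. by case=> [[?|[? ?]]|[? ?]]. Qed.

Lemma par_ext0 (x : 'I_N) (u : V) : ~~ par u (ext x).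
Proof. by case: u => [[?|[? ?]]|[? ?]]. Qed.

Lemma ext_inj : injective ext.
Proof. by move=> x y [->]. Qed.

Lemma par_deg (u : V) : #|[set v | par u v]| \in [:: 0; 2].
Proof.
case: u => [[i|[i s]]|[i s]].
- have -> : [set v | par (inl (inl i)) v] = [set vint i false; vint i true].
    apply/setP => -[[x|[x b]]|[x b]]; rewrite !inE //=.
    rewrite /vint /= !sumE. by case: b; rewrite ?andbT ?andbF ?orbF.
  by rewrite cards2 /vint !sumE eqxx.
- have -> : [set v | par (inl (inr (i, s))) v] = [set fnd i s; fnd (ordS i) (s (+) t i)].
    by apply/setP => -[[x|[x b]]|[x b]]; rewrite !inE //= /fnd !sumE.
  by rewrite cards2 /fnd !sumE eq_sym (negbTE (ordS_neq i)).
- have -> : [set v | par (inr (i, s)) v] = set0.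
    by apply/setP => -[[x|[x b]]|[x b]]; rewrite !inE.
  by rewrite cards0.
Qed.

Lemma par_noisol (v : V) : exists u : V, par v u || par u v.
Proof.
case: v => [[i|[i s]]|[i s]].
- by exists (vint i false); rewrite /= eqxx.
- by exists (fnd i s); rewrite /= !eqxx.
- by exists (vint i s); rewrite /= !eqxx.
Qed.

Definition Ped : pedigree 'I_N :=
  @Pedigree 'I_N V par ext ext_inj par_irr par_deg par_ext0 par_noisol.


Definition anc (y : 'I_N) (v : V) : bool :=
  match v with
  | inl (inl x) => x == y
  | inl (inr (i, _)) => i == y
  | inr (k, _) => (k == y) || (k == ordS y)
  end.

Lemma anc_closed y u v : anc y u -> par u v -> anc y v.
Proof.
case: u => [[x|[x b]]|[x b]]; case: v => [[x'|[x' b']]|[x' b']] //=.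
- by move/eqP->.
- by move/eqP->; case/orP => /andP[/eqP-> _]; rewrite eqxx ?orbT.
Qed.

Lemma desc_anc y v : connect par (ext y) v = anc y v.
Proof.
apply/idP/idP.
- case/connectP => p.
  have : anc y (ext y) by rewrite /= eqxx.
  elim: p (ext y) => [|z p IH] x ax /=; first by move=> _ ->.
  case/andP => pxz pz; exact: IH (anc_closed ax pxz) pz.
- case: v => [[x|[x b]]|[x b]] /=.
  + by move/eqP->; exact: connect0.
  + by move/eqP->; apply: connect1; rewrite /= eqxx.
  + case/orP => /eqP->.
      apply: (connect_trans (y := vint y b)); apply: connect1; by rewrite /= !eqxx.
    apply: (connect_trans (y := vint y (b (+) t y))); apply: connect1;
      by rewrite /= ?eqxx // -addbA addbb addbF eqxx orbT.
Qed.

End Cons.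

Section Main.
Variable m : nat.
Local Notation N := m.+3.

Definition tT : 'I_N -> bool := fun _ => false.
Definition tU : 'I_N -> bool := fun i => i == ord_max.

Lemma subped_anc (t : 'I_N -> bool) (Y : {set 'I_N}) :
  subped_vertices (Ped t) Y = [set v | [exists y in Y, anc y v]].
Proof.
apply/setP => v; rewrite !inE; apply: eq_existsb => y.
by rewrite /descendant /= desc_anc.
Qed.

Definition phi (S : 'I_N -> bool) (v : V m) : V m :=
  match v with
  | inl (inl x) => inl (inl x)
  | inl (inr (i, s)) => inl (inr (i, s (+) S i))
  | inr (k, s) => inr (k, s (+) S k)
  end.

Lemma phiK S : involutive (phi S).
Proof. by case=> [[x|[x b]]|[x b]] //=; case: b; case: (S x). Qed.

Lemma anc_phi S y v : anc y (phi S v) = anc y v.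
Proof. by case: v => [[x|[x b]]|[x b]]. Qed.

Lemma keyS (j i : 'I_N) : i != j ->
  (j < ordS i) = (j < i) (+) (i == ord_max).
Proof.
move=> nij; rewrite ordS_val; case: (i =P ord_max) => [e|ne].
- have hj : val j != m.+2.
    apply/negP => /eqP hj; move: nij; rewrite e; move/negP; apply.
    by apply/eqP/val_inj.
  rewrite e /= ltn0 /=; have := ltn_ord j; move: hj; rewrite /=; lia.
- have hij : val i != val j by [].
  move: hij; rewrite addbF ltnS leq_eqVlt; case: eqP => //= e; lia.
Qed.

Lemma cardY (Y : {set 'I_N}) : #|Y| = m.+2 -> exists j, Y = ~: [set j].
Proof.
move=> hY; have : #|~: Y| == 1 by rewrite cardsCs setCK card_ord hY subSnn.
case/cards1P => j hj; exists j; by rewrite -hj setCK.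
Qed.

Lemma part_iso (Y : {set 'I_N}) : #|Y| = m.+2 -> sub_iso (Ped tT) (Ped tU) Y.
Proof.
case/cardY => j ->.
set S := fun k : 'I_N => j < k.
exists (phi S); split.
- by move=> u v _ _; apply: (can_inj (phiK S)).
- rewrite !subped_anc; apply/setP => v; rewrite inE.
  apply/imsetP/idP => [[u]|h].
    by rewrite inE => h ->; under eq_existsb do rewrite anc_phi.
  exists (phi S v); last by rewrite phiK.
  by rewrite inE; under eq_existsb do rewrite anc_phi.
- move=> u v; rewrite subped_anc inE => /existsP [y /andP [hy ay]] _.
  case: u ay => [[x|[x b]]|[x b]]; case: v => [[x'|[x' b']]|[x' b']] //= /eqP exy.
  have nxj : x != j by move: hy; rewrite exy !inE.
  rewrite /tT /tU addbF.
  case: (x' =P x) => [->|nx'x] /=.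
    rewrite [x == ordS x]eq_sym (negbTE (ordS_neq x)) /= !orbF.
    by case: b; case: b'; case: (S x).
  case: (x' =P ordS x) => [->|] //=.
  rewrite /S keyS //.
  by case: b; case: b'; case: (j < x); case: (x == ord_max).
- by [].
Qed.

Lemma inord_succ (k : nat) : k.+1 < N -> @inord m.+2 k.+1 = ordS (inord k).
Proof.
move=> hk; apply: val_inj; rewrite ordS_val.
have hk' : k < N by apply: ltnW.
case: eqP => [e|_]; last by rewrite /= !inordK.
move/(congr1 val): e; rewrite /= inordK // => e; move: hk; rewrite e; lia.
Qed.

Lemma part_noniso : ~ sub_iso (Ped tT) (Ped tU) setT.
Proof.
case=> f [finj fim farc ffix].
have allin : forall v, v \in subped_vertices (Ped tT) setT.
  move=> v; rewrite subped_anc inE; apply/existsP.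
  case: v => [[x|[x b]]|[x b]]; by exists x; rewrite inE /= eqxx.
have fa : forall u v, par tT u v = par tU (f u) (f v).
  by move=> u v; apply: farc; apply: allin.
have fx : forall y, f (ext y) = ext y by move=> y; apply: ffix; rewrite inE.
pose h i := match f (vint i false) with inl (inr (_, b)) => b | _ => false end.
have hdef : forall i, f (vint i false) = vint i (h i).
  move=> i; have := fa (ext i) (vint i false); rewrite /= eqxx fx /h.
  by case: (f (vint i false)) => [[x|[x b]]|[x b]] //= /esym /eqP ->.
have hstep : forall i, h (ordS i) = h i (+) (i == ord_max).
  move=> i.
  have e1 := fa (vint (ordS i) false) (fnd (ordS i) false).
  have e2 := fa (vint i false) (fnd (ordS i) false).
  rewrite /= !eqxx /= hdef in e1; rewrite /= !eqxx /= ?orbT hdef in e2.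
  move: e1 e2; case: (f (fnd (ordS i) false)) => [[x|[x b]]|[x b]] //=.
  move=> /esym/orP e1 /esym/orP e2.
  have n1 := ordS_neq i; have n2 := ordSS_neq i; have n3 := ordS_neq (ordS i).
  case: e1 => /andP [/eqP ex /eqP eb]; case: e2 => /andP [/eqP ex' /eqP eb'].
  - by move: n1; rewrite -ex ex' eqxx.
  - by rewrite -eb eb' /tU.
  - by move: n2; rewrite -ex ex' eqxx.
  - by move: n3; rewrite -ex ex' eqxx.
have hall : forall k, k < N -> h (inord k) = h ord0.
  elim=> [|k IH] hk.
    by congr h; apply: val_inj; rewrite /= inordK.
  rewrite inord_succ // hstep IH ?(ltnW hk) //.
  have -> : (@inord m.+2 k == ord_max) = false.
    apply/negP => /eqP/(congr1 val); rewrite /= inordK ?(ltnW hk) // => e.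
    by move: hk; rewrite e ltnn.
  by rewrite addbF.
have := hstep ord_max; rewrite eqxx.
have -> : ordS (@ord_max m.+2) = ord0 by apply: val_inj; rewrite ordS_val eqxx.
have -> : (@ord_max m.+2) = inord m.+2 by apply: val_inj; rewrite /= inordK.
rewrite hall //; by case: (h ord0).
Qed.

End Main.

Theorem mainTheorem1 :
  (forall n : nat, 2 < n ->
     exists (X0 : finType) (T U : pedigree X0),
       [/\ #|X0| = n,
           (forall Y : {set X0}, #|Y| = n.-1 -> sub_iso T U Y)
         & ~ sub_iso T U setT])
  /\
  (forall n : nat, 3 < n ->
     exists (X0 : finType) (T : pedigree X0),
       #|X0| = n /\ ~ r_reconstructible n.-1 T).
Proof.
have p1 : forall n : nat, 2 < n ->
     exists (X0 : finType) (T U : pedigree X0),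
       [/\ #|X0| = n,
           (forall Y : {set X0}, #|Y| = n.-1 -> sub_iso T U Y)
         & ~ sub_iso T U setT].
  case=> [|[|[|m]]] // _.
  exists 'I_m.+3, (Ped (@tT m)), (Ped (@tU m)); split.
  - by rewrite card_ord.
  - exact: part_iso.
  - exact: part_noniso.
split => // n hn.
have [X0 [T [U [hc hY hn']]]] := p1 n (ltnW hn).
exists X0, T; split => // rec; apply: hn'; apply: rec => Y; exact: hY.
Qed.
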